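(* Let $(f_k(t))_{k=0,\ldots,n}$ be a constant speed path with speed $v>0$ and coefficients $\boldsymbol\alpha\in\mathcal A$, with $f_k(t)>0$ for all $k,t$ and $\alpha_k$ differentiable in $t$, and fix $t$. Suppose at this $t$: (1) $\alpha_k\le\alpha_{k+1}$ for $k=0,\ldots,n-1$; (2) $\frac{\partial\alpha_k}{\partial t}\ge0$ for $k=0,\ldots,n$; (3) $\alpha_{k+1}(1-\alpha_{k+1})f_{k+1}^2-\alpha_{k+2}(1-\alpha_k)f_kf_{k+2}\ge0$ for $k=0,\ldots,n-2$; and $f_{k+1}^2-f_kf_{k+2}>0$ for $k=0,\ldots,n-2$. Then for $k=0,\ldots,n-2$, $h_k\le\widetilde h_k$, where $$\widetilde h_k=\frac{2g_kg_{k+1}f_{k+1}-g_k^2f_{k+2}-g_{k+1}^2f_k}{f_{k+1}^2-f_kf_{k+2}},$$ $$h_k=(1-\alpha_k)(1-\alpha_{k+1})f_k+2\alpha_{k+1}(1-\alpha_{k+1})f_{k+1}+\alpha_{k+1}\alpha_{k+2}f_{k+2}-\frac1vf_{k+1}\frac{\partial\alpha_{k+1}}{\partial t}.$$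
   Context: Fix an integer $n\ge1$. For a sequence $(a_k)_{k\in\mathbb Z}$ write $\nabla_1 a_k=a_k-a_{k-1}$. Functions indexed by $k$ are extended by $0$ outside their stated index range. $\mathcal A$ denotes the set of measurable $\boldsymbol\alpha(t)=(\alpha_0(t),\ldots,\alpha_n(t))$, $t\in[0,1]$, with $\alpha_0\equiv0$, $\alpha_n\equiv1$ and $0\le\alpha_k(t)\le1$ for all $k,t$. A family $(f_k(t))_{k=0,\ldots,n}$ of probability mass functions on $\{0,\ldots,n\}$ is a constant speed path with speed $v\in\mathbb R$ and coefficients $\boldsymbol\alpha\in\mathcal A$ if $\frac{\partial f_k}{\partial t}(t)=-v\,\nabla_1 g_k(t)$ for $k=0,\ldots,n$, where $g_k(t)=\alpha_{k+1}(t)f_{k+1}(t)+(1-\alpha_k(t))f_k(t)$ for $k=0,\ldots,n-1$ and $g_k=0$ for $k\notin\{0,\ldots,n-1\}$. *)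

(* Defs.v *)
From Stdlib Require Import Reals Lra.
Open Scope R_scope.

Definition in01 (t : R) : Prop := 0 <= t <= 1.

(* Derivative of F at t relative to [0,1] (one-sided at the endpoints). *)
Definition deriv01 (F : R -> R) (t l : R) : Prop :=
  forall eps : R, 0 < eps -> exists delta : R, 0 < delta /\
    forall s : R, in01 s -> s <> t -> Rabs (s - t) < delta ->
      Rabs ((F s - F t) / (s - t) - l) < eps.

(* alpha in the class A (indices k = 0..n); measurability is implied by the
   differentiability hypothesis of the theorem. *)
Definition in_A (n : nat) (alpha : nat -> R -> R) : Prop :=
  forall t, in01 t ->
    alpha 0%nat t = 0 /\ alpha n t = 1 /\
    (forall k, (k <= n)%nat -> 0 <= alpha k t <= 1).

(* g_k(t), extended by 0 outside k = 0..n-1 *)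
Definition gfun (n : nat) (alpha f : nat -> R -> R) (k : nat) (t : R) : R :=
  if Nat.ltb k n then alpha (S k) t * f (S k) t + (1 - alpha k t) * f k t
  else 0.

(* backward difference nabla_1 g_k = g_k - g_{k-1}, with g_{-1} = 0 *)
Definition nabla_g (n : nat) (alpha f : nat -> R -> R) (k : nat) (t : R) : R :=
  match k with
  | O => gfun n alpha f 0 t
  | S j => gfun n alpha f (S j) t - gfun n alpha f j t
  end.

Definition pmf_family (n : nat) (f : nat -> R -> R) : Prop :=
  forall t, in01 t ->
    (forall k, (k <= n)%nat -> 0 <= f k t) /\
    sum_f_R0 (fun k => f k t) n = 1.

Definition const_speed_path (n : nat) (v : R) (alpha f : nat -> R -> R) : Prop :=
  in_A n alpha /\ pmf_family n f /\
  forall k t, (k <= n)%nat -> in01 t ->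
    deriv01 (f k) t (- v * nabla_g n alpha f k t).

Definition htilde (n : nat) (alpha f : nat -> R -> R) (k : nat) (t : R) : R :=
  let g0 := gfun n alpha f k t in
  let g1 := gfun n alpha f (S k) t in
  (2 * g0 * g1 * f (S k) t - g0 ^ 2 * f (S (S k)) t - g1 ^ 2 * f k t)
  / (f (S k) t ^ 2 - f k t * f (S (S k)) t).

(* da k t is the t-derivative of alpha_k at t *)
Definition hfun (alpha f da : nat -> R -> R) (v : R) (k : nat) (t : R) : R :=
  (1 - alpha k t) * (1 - alpha (S k) t) * f k t
  + 2 * alpha (S k) t * (1 - alpha (S k) t) * f (S k) t
  + alpha (S k) t * alpha (S (S k)) t * f (S (S k)) t
  - / v * f (S k) t * da (S k) t.

(* Main.v *)
Require Import Defs.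
From Stdlib Require Import Reals Lra Psatz Lia.
Open Scope R_scope.
Lemma keyS a0 a1 a2 f0 f1 f2 :
  0 <= a0 -> a0 <= a1 -> a1 <= a2 -> a2 <= 1 -> 0 < f0 -> 0 < f1 -> 0 < f2 ->
  0 < f1^2 - f0*f2 ->
  0 <= a1*(1-a1)*f1^2 - a2*(1-a0)*f0*f2 ->
  0 <= (a2-a1)*f2*(a1*(f1^2-f0*f2) - (a2-a1)*(f0*f2))
     + (a1-a0)*f0*((1-a1)*(f1^2-f0*f2) - (a1-a0)*(f0*f2))
     + 2*(a2-a1)*(a1-a0)*f1*(f0*f2).
Proof.
  intros H0 H1 H2 H3 F0 F1 F2 HD HC.
  remember (f1^2 - f0*f2) as X. remember (f0*f2) as Y.
  assert (HY : 0 < Y) by (subst Y; nra).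
  assert (HC' : 0 <= a1*(1-a1)*X - ((a1-a0)*a1 + (a2-a1)*(1-a1) + (a2-a1)*(a1-a0))*Y)
    by (subst X Y; nra).
  destruct (Req_dec a1 0) as [E|E].
  - assert (a0 = 0) by lra. subst a1 a0.
    assert (a2 * Y <= 0) by nra. assert (a2 = 0) by nra. subst a2. nra.
  - destruct (Req_dec a1 1) as [E1|E1].
    + subst a1. assert (a2 = 1) by lra. subst a2.
      assert ((1-a0)*Y <= 0) by nra. assert (a0 = 1) by nra. subst a0. nra.
    + set (p := a2 - a1) in *. set (q := a1 - a0) in *.
      set (C := a1*(1-a1)*X - (q*a1 + p*(1-a1) + p*q)*Y) in *.
      assert (Hp : 0 <= p) by (unfold p; lra). assert (Hq : 0 <= q) by (unfold q; lra).
      assert (Hab : 0 < a1*(1-a1)) by (apply Rmult_lt_0_compat; lra).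
      assert (Hid : a1*(1-a1) * (p*f2*(a1*X - p*Y) + q*f0*((1-a1)*X - q*Y) + 2*p*q*f1*Y)
         = p*f2*a1*(C + q*a2*Y) + q*f0*(1-a1)*(C + p*(1-a0)*Y) + 2*p*q*f1*Y*(a1*(1-a1)))
        by (unfold C, p, q; ring).
      assert (0 <= p*f2*a1*(C + q*a2*Y) + q*f0*(1-a1)*(C + p*(1-a0)*Y) + 2*p*q*f1*Y*(a1*(1-a1))).
      { assert (0 <= p*f2*a1) by (repeat apply Rmult_le_pos; lra).
        assert (0 <= q*f0*(1-a1)) by (repeat apply Rmult_le_pos; lra).
        assert (0 <= q*a2*Y) by (repeat apply Rmult_le_pos; lra).
        assert (0 <= p*(1-a0)*Y) by (repeat apply Rmult_le_pos; lra).
        assert (0 <= 2*p*q*f1*Y*(a1*(1-a1))) by (repeat apply Rmult_le_pos; lra).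
        nra. }
      rewrite <- Hid in H. nra.
Qed.

Theorem proposition4p3 (n : nat) (hn : (1 <= n)%nat) (v : R)
  (alpha f da : nat -> R -> R) (t : R) :
  0 < v ->
  const_speed_path n v alpha f ->
  (forall k s, (k <= n)%nat -> in01 s -> 0 < f k s) ->
  (forall k s, (k <= n)%nat -> in01 s -> deriv01 (alpha k) s (da k s)) ->
  in01 t ->
  (forall k, (k < n)%nat -> alpha k t <= alpha (S k) t) ->
  (forall k, (k <= n)%nat -> 0 <= da k t) ->
  (forall k, (k + 2 <= n)%nat ->
     0 <= alpha (S k) t * (1 - alpha (S k) t) * f (S k) t ^ 2
          - alpha (S (S k)) t * (1 - alpha k t) * f k t * f (S (S k)) t) ->
  (forall k, (k + 2 <= n)%nat -> 0 < f (S k) t ^ 2 - f k t * f (S (S k)) t) ->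
  forall k, (k + 2 <= n)%nat ->
    hfun alpha f da v k t <= htilde n alpha f k t.
Proof.
  intros hv [hA _] hf _ ht hmon hda h3 h4 k hk.
  destruct (hA t ht) as [_ [_ hb]].
  pose proof (hb k ltac:(lia)) as B0.
  pose proof (hb (S (S k)) ltac:(lia)) as B2.
  pose proof (hmon k ltac:(lia)) as M0.
  pose proof (hmon (S k) ltac:(lia)) as M1.
  pose proof (hf k t ltac:(lia) ht) as F0.
  pose proof (hf (S k) t ltac:(lia) ht) as F1.
  pose proof (hf (S (S k)) t ltac:(lia) ht) as F2.
  pose proof (hda (S k) ltac:(lia)) as D1.
  pose proof (h3 k hk) as C. pose proof (h4 k hk) as HD.
  unfold hfun, htilde, gfun.
  replace (Nat.ltb k n) with true by (symmetry; apply Nat.ltb_lt; lia).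
  replace (Nat.ltb (S k) n) with true by (symmetry; apply Nat.ltb_lt; lia).
  set (a0 := alpha k t) in *. set (a1 := alpha (S k) t) in *.
  set (a2 := alpha (S (S k)) t) in *.
  set (f0 := f k t) in *. set (f1 := f (S k) t) in *. set (f2 := f (S (S k)) t) in *.
  set (d := da (S k) t) in *.
  pose proof (keyS a0 a1 a2 f0 f1 f2 ltac:(lra) M0 M1 ltac:(lra) F0 F1 F2 HD C) as K.
  assert (0 <= / v * f1 * d).
  { apply Rmult_le_pos; [apply Rmult_le_pos|]; try lra. left; apply Rinv_0_lt_compat; lra. }
  apply Rle_trans with ((1 - a0) * (1 - a1) * f0 + 2 * a1 * (1 - a1) * f1 + a1 * a2 * f2).
  { lra. }
  apply Rmult_le_reg_r with (f1 ^ 2 - f0 * f2); [exact HD|].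
  match goal with |- _ <= ?N / ?D * _ => replace (N / D * D) with N by (field; lra) end.
  match goal with |- ?A <= ?B => cut (0 <= B - A); [lra|] end.
  replace (_ - _) with ((a2-a1)*f2*(a1*(f1^2-f0*f2) - (a2-a1)*(f0*f2))
     + (a1-a0)*f0*((1-a1)*(f1^2-f0*f2) - (a1-a0)*(f0*f2))
     + 2*(a2-a1)*(a1-a0)*f1*(f0*f2)) by ring.
  exact K.
Qed.
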